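(* Let $K$ be a compact metrizable space of topological dimension at most $1$, and let $J$ be a compact subset of $K$. Let $B$ be a uniform algebra on $J$ with dense invertibles, and let $A=\{f\in C(K): f|_J\in B\}$. Then $A$ has dense invertibles.
   Context: A uniform algebra on a compact Hausdorff space $J$ is a closed subalgebra of $C(J)$ (supremum norm) containing the constants and separating points. A uniform algebra has dense invertibles if its invertible elements are dense in it. Topological dimension means Lebesgue covering dimension. *)

(* Defs.v *)
From Stdlib Require Import Reals Lra.
Open Scope R_scope.

Definition Cx : Type := (R * R)%type.
Definition Cadd (z w : Cx) : Cx := (fst z + fst w, snd z + snd w).
Definition Cmul (z w : Cx) : Cx :=
  (fst z * fst w - snd z * snd w, fst z * snd w + snd z * fst w).
Definition Copp (z : Cx) : Cx := (- fst z, - snd z).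
Definition Cone : Cx := (1, 0).
Definition Cmod (z : Cx) : R := sqrt (fst z * fst z + snd z * snd z).

Record MetricSpace := MkMetricSpace {
  pt :> Type;
  dist : pt -> pt -> R;
  dist_self : forall x, dist x x = 0;
  dist_eq : forall x y, dist x y = 0 -> x = y;
  dist_sym : forall x y, dist x y = dist y x;
  dist_tri : forall x y z, dist x z <= dist x y + dist y z
}.
Arguments dist {m} _ _.

Definition is_open {X : MetricSpace} (U : X -> Prop) : Prop :=
  forall x, U x -> exists r, 0 < r /\ forall y, dist x y < r -> U y.

Definition compact_set {X : MetricSpace} (J : X -> Prop) : Prop :=
  forall (I : Type) (U : I -> X -> Prop),
    (forall i, is_open (U i)) ->
    (forall x, J x -> exists i, U i x) ->
    exists l : list I, forall x, J x -> exists i, List.In i l /\ U i x.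

Definition compact_space (X : MetricSpace) : Prop :=
  compact_set (fun _ : X => True).

(* Lebesgue covering dimension <= 1: every finite open cover U_0..U_{n-1}
   has a finite open refinement V_0..V_{m-1} of order <= 1, i.e. no point
   lies in three members with distinct indices. *)
Definition covering_dim_le1 (X : MetricSpace) : Prop :=
  forall (n : nat) (U : nat -> X -> Prop),
    (forall i, (i < n)%nat -> is_open (U i)) ->
    (forall x, exists i, (i < n)%nat /\ U i x) ->
    exists (m : nat) (V : nat -> X -> Prop),
      (forall j, (j < m)%nat -> is_open (V j)) /\
      (forall x, exists j, (j < m)%nat /\ V j x) /\
      (forall j, (j < m)%nat -> exists i, (i < n)%nat /\ forall x, V j x -> U i x) /\
      (forall x i j k, (i < m)%nat -> (j < m)%nat -> (k < m)%nat ->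
         i <> j -> j <> k -> i <> k -> V i x -> V j x -> V k x -> False).

Section Sub.
Variable X : MetricSpace.
Variable J : X -> Prop.
Definition sub_dist (a b : {x : X | J x}) : R := dist (proj1_sig a) (proj1_sig b).
Lemma sub_dist_self a : sub_dist a a = 0.
Proof. apply dist_self. Qed.
Lemma sub_dist_eq a b : sub_dist a b = 0 -> a = b.
Proof.
  destruct a as [a Ha], b as [b Hb]; unfold sub_dist; simpl; intro H.
  apply dist_eq in H; subst b.
  now rewrite (Classical_Prop.proof_irrelevance _ Ha Hb).
Qed.
Lemma sub_dist_sym a b : sub_dist a b = sub_dist b a.
Proof. apply dist_sym. Qed.
Lemma sub_dist_tri a b c : sub_dist a c <= sub_dist a b + sub_dist b c.
Proof. apply dist_tri. Qed.
Definition subspace : MetricSpace :=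
  MkMetricSpace {x : X | J x} sub_dist sub_dist_self sub_dist_eq sub_dist_sym sub_dist_tri.
End Sub.

Definition continuous_fun {X : MetricSpace} (f : X -> Cx) : Prop :=
  forall x eps, 0 < eps -> exists d, 0 < d /\
    forall y, dist x y < d -> Cmod (Cadd (f y) (Copp (f x))) < eps.

Definition uniform_algebra {X : MetricSpace} (B : (X -> Cx) -> Prop) : Prop :=
  (forall f, B f -> continuous_fun f) /\
  (forall c : Cx, B (fun _ => c)) /\
  (forall f g, B f -> B g -> B (fun x => Cadd (f x) (g x))) /\
  (forall f g, B f -> B g -> B (fun x => Cmul (f x) (g x))) /\
  (forall x y : X, x <> y -> exists f, B f /\ f x <> f y) /\
  (forall f, continuous_fun f ->
     (forall eps, 0 < eps -> exists g, B g /\ forall x, Cmod (Cadd (f x) (Copp (g x))) <= eps) ->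
     B f).

Definition invertible_in {X : Type} (B : (X -> Cx) -> Prop) (g : X -> Cx) : Prop :=
  B g /\ exists h, B h /\ forall x, Cmul (g x) (h x) = Cone.

Definition dense_invertibles {X : Type} (B : (X -> Cx) -> Prop) : Prop :=
  forall f, B f -> forall eps, 0 < eps ->
    exists g, invertible_in B g /\ forall x, Cmod (Cadd (f x) (Copp (g x))) < eps.

(* Main.v *)
Require Import Defs.
From Stdlib Require Import Reals Lra Lia Classical ClassicalDescription ClassicalEpsilon FunctionalExtensionality List.
From Coquelicot Require Complex Series Coquelicot.
Open Scope R_scope.

Lemma Cmod_eqC (z : Cx) : Cmod z = Complex.Cmod z.
Proof. unfold Cmod, Complex.Cmod. f_equal. simpl. ring. Qed.

Lemma Cm_ge0 z : 0 <= Cmod z.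
Proof. rewrite Cmod_eqC. apply Complex.Cmod_ge_0. Qed.

Lemma Cm_tri a b : Cmod (Cadd a b) <= Cmod a + Cmod b.
Proof. rewrite !Cmod_eqC. apply (Complex.Cmod_triangle a b). Qed.

Lemma Cm_mul a b : Cmod (Cmul a b) = Cmod a * Cmod b.
Proof. rewrite !Cmod_eqC. apply (Complex.Cmod_mult a b). Qed.

Lemma Cm_fst z : Rabs (fst z) <= Cmod z.
Proof.
  unfold Cmod. rewrite <- sqrt_Rsqr_abs. apply sqrt_le_1_alt.
  unfold Rsqr. pose proof (Rle_0_sqr (snd z)). unfold Rsqr in H. lra.
Qed.
Lemma Cm_snd z : Rabs (snd z) <= Cmod z.
Proof.
  unfold Cmod. rewrite <- sqrt_Rsqr_abs. apply sqrt_le_1_alt.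
  unfold Rsqr. pose proof (Rle_0_sqr (fst z)). unfold Rsqr in H. lra.
Qed.

Lemma Cm_le_sum z : Cmod z <= Rabs (fst z) + Rabs (snd z).
Proof.
  destruct z as [a b]. pose proof (Cm_tri (a,0) (0,b)) as H.
  unfold Cadd in H; simpl in H. replace (a+0) with a in H by ring.
  replace (0+b) with b in H by ring. eapply Rle_trans; [apply H|].
  unfold Cmod; simpl. replace (a*a+0*0) with (Rsqr (Rabs a)).
  replace (0*0+b*b) with (Rsqr (Rabs b)).
  rewrite !sqrt_Rsqr by apply Rabs_pos. lra.
  unfold Rsqr; rewrite <- Rabs_mult, Rabs_right; [ring|]. 
  replace (b*b) with (Rsqr b) by reflexivity. apply Rle_ge, Rle_0_sqr.
  unfold Rsqr; rewrite <- Rabs_mult, Rabs_right; [ring|].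
  replace (a*a) with (Rsqr a) by reflexivity. apply Rle_ge, Rle_0_sqr.
Qed.

Lemma Cm_zero z : Cmod z = 0 -> z = (0,0).
Proof. rewrite Cmod_eqC. intro H. apply Complex.Cmod_eq_0 in H. exact H. Qed.

Lemma Cm_pos z : z <> (0,0) -> 0 < Cmod z.
Proof.
  intro H. destruct (Cm_ge0 z) as [h|h]; auto. exfalso; apply H, Cm_zero; auto.
Qed.

Definition Cscale (r : R) (z : Cx) : Cx := (r * fst z, r * snd z).

Lemma Cm_scale r z : Cmod (Cscale r z) = Rabs r * Cmod z.
Proof.
  replace (Cscale r z) with (Cmul (r,0) z).
  rewrite Cm_mul. f_equal. unfold Cmod; simpl.
  replace (r*r+0*0) with (Rsqr r) by (unfold Rsqr; ring). apply sqrt_Rsqr_abs.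
  unfold Cmul, Cscale; simpl. f_equal; ring.
Qed.

Lemma Cm_opp z : Cmod (Copp z) = Cmod z.
Proof. unfold Cmod, Copp; simpl. f_equal. ring. Qed.

Lemma Cm_sub_sym a b : Cmod (Cadd a (Copp b)) = Cmod (Cadd b (Copp a)).
Proof. unfold Cmod, Copp, Cadd; simpl. f_equal. ring. Qed.

Lemma Cm_sub_tri a b c :
  Cmod (Cadd a (Copp c)) <= Cmod (Cadd a (Copp b)) + Cmod (Cadd b (Copp c)).
Proof.
  replace (Cadd a (Copp c)) with (Cadd (Cadd a (Copp b)) (Cadd b (Copp c))).
  apply Cm_tri. unfold Cadd, Copp; simpl. f_equal; ring.
Qed.

Lemma Cm_rev a b : Rabs (Cmod a - Cmod b) <= Cmod (Cadd a (Copp b)).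
Proof.
  apply Rabs_le. split.
  - pose proof (Cm_tri (Cadd b (Copp a)) a). 
    replace (Cadd (Cadd b (Copp a)) a) with b in H by (unfold Cadd, Copp; destruct a, b; simpl; f_equal; ring).
    rewrite Cm_sub_sym in H. lra.
  - pose proof (Cm_tri (Cadd a (Copp b)) b).
    replace (Cadd (Cadd a (Copp b)) b) with a in H by (unfold Cadd, Copp; destruct a, b; simpl; f_equal; ring).
    lra.
Qed.

Notation md := Defs.dist.
Definition rcont {X : MetricSpace} (f : X -> R) : Prop :=
  forall x eps, 0 < eps -> exists d, 0 < d /\ forall y, md x y < d -> Rabs (f y - f x) < eps.

Section RC.
Context {X : MetricSpace}.

Lemma rcont_const (c : R) : rcont (fun _ : X => c).
Proof. intros x e he. exists 1. split; [lra|]. intros. rewrite Rminus_diag, Rabs_R0. lra. Qed.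

Lemma rcont_dist (a : X) : rcont (fun y => md a y).
Proof.
  intros x e he. exists e. split; auto. intros y hy.
  pose proof (Defs.dist_tri X a x y); pose proof (Defs.dist_tri X a y x); rewrite (Defs.dist_sym X y x) in *.
  apply Rabs_def1; lra.
Qed.

Lemma rcont_plus (f g : X -> R) : rcont f -> rcont g -> rcont (fun y => f y + g y).
Proof.
  intros hf hg x e he. destruct (hf x (e/2)) as [d1 [h1 H1]]; [lra|].
  destruct (hg x (e/2)) as [d2 [h2 H2]]; [lra|].
  exists (Rmin d1 d2). split; [apply Rmin_pos; auto|]. intros y hy.
  pose proof (H1 y (Rlt_le_trans _ _ _ hy (Rmin_l _ _))).
  pose proof (H2 y (Rlt_le_trans _ _ _ hy (Rmin_r _ _))).
  replace (f y + g y - (f x + g x)) with ((f y - f x) + (g y - g x)) by ring.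
  eapply Rle_lt_trans; [apply Rabs_triang|]. lra.
Qed.

Lemma rcont_comp (g : R -> R) (f : X -> R) :
  (forall x, continuity_pt g (f x)) -> rcont f -> rcont (fun y => g (f y)).
Proof.
  intros hg hf x e he. destruct (hg x e he) as [a [ha Ha]].
  destruct (hf x a ha) as [d [hd Hd]]. exists d; split; auto. intros y hy.
  destruct (Req_dec (f y) (f x)) as [E|E].
  - rewrite E, Rminus_diag, Rabs_R0; auto.
  - apply (Ha (f y)). split. split; [exact I| auto]. apply Hd; auto.
Qed.

Lemma rcont_scal (c : R) f : rcont f -> rcont (fun y : X => c * f y).
Proof.
  intro hf. apply (rcont_comp (fun t => c * t)); auto. intro x.
  apply derivable_continuous_pt. apply (derivable_pt_scal id c), derivable_pt_id.
Qed.

Lemma rcont_sq f : rcont f -> rcont (fun y : X => f y * f y).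
Proof.
  intro hf. apply (rcont_comp (fun t => t * t)); auto. intro x.
  apply derivable_continuous_pt. apply (derivable_pt_mult id id), derivable_pt_id; apply derivable_pt_id.
Qed.

Lemma rcont_mult f g : rcont f -> rcont g -> rcont (fun y : X => f y * g y).
Proof.
  intros hf hg.
  assert (E : (fun y => f y * g y) = fun y => /4 * ((f y + g y) * (f y + g y)) + (-/4) * ((f y + - 1 * g y) * (f y + -1 * g y))).
  { apply functional_extensionality; intro; field. }
  rewrite E. apply rcont_plus; apply rcont_scal; apply rcont_sq; apply rcont_plus; auto.
  apply rcont_scal; auto.
Qed.

Lemma rcont_minus f g : rcont f -> rcont g -> rcont (fun y : X => f y - g y).
Proof.
  intros. assert (E : (fun y => f y - g y) = fun y => f y + -1 * g y).
  { apply functional_extensionality; intro; ring. }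
  rewrite E. apply rcont_plus; auto. apply rcont_scal; auto.
Qed.

Lemma rcont_inv f : (forall y, f y <> 0) -> rcont f -> rcont (fun y : X => / f y).
Proof.
  intros hz hf. apply (rcont_comp Rinv); auto. intro x.
  apply (continuity_pt_inv id). apply derivable_continuous_pt, derivable_pt_id. apply hz.
Qed.

Lemma rcont_abs f : rcont f -> rcont (fun y : X => Rabs (f y)).
Proof.
  intros hf x e he. destruct (hf x e he) as [d [hd H]]. exists d; split; auto.
  intros y hy. eapply Rle_lt_trans; [apply Rabs_triang_inv2|]. apply H; auto.
Qed.

Lemma rcont_max f g : rcont f -> rcont g -> rcont (fun y : X => Rmax (f y) (g y)).
Proof.
  intros. assert (E : (fun y => Rmax (f y) (g y)) = fun y => /2 * (f y + g y) + /2 * Rabs (f y - g y)).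
  { apply functional_extensionality; intro y. unfold Rmax. destruct (Rle_dec (f y) (g y)).
    rewrite Rabs_left1 by lra. field. rewrite Rabs_right by lra. field. }
  rewrite E. apply rcont_plus; apply rcont_scal; [apply rcont_plus|apply rcont_abs, rcont_minus]; auto.
Qed.

Lemma rcont_min f g : rcont f -> rcont g -> rcont (fun y : X => Rmin (f y) (g y)).
Proof.
  intros. assert (E : (fun y => Rmin (f y) (g y)) = fun y => /2 * (f y + g y) + (-/2) * Rabs (f y - g y)).
  { apply functional_extensionality; intro y. unfold Rmin. destruct (Rle_dec (f y) (g y)).
    rewrite Rabs_left1 by lra. field. rewrite Rabs_right by lra. field. }
  rewrite E. apply rcont_plus; apply rcont_scal; [apply rcont_plus|apply rcont_abs, rcont_minus]; auto.
Qed.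

Lemma cont_iff (f : X -> Cx) :
  continuous_fun f <-> rcont (fun y => fst (f y)) /\ rcont (fun y => snd (f y)).
Proof.
  split.
  - intro hf; split; intros x e he; destruct (hf x e he) as [d [hd H]]; exists d; split; auto;
    intros y hy; eapply Rle_lt_trans; try apply (H y hy).
    apply (Cm_fst (Cadd (f y) (Copp (f x)))). apply (Cm_snd (Cadd (f y) (Copp (f x)))).
  - intros [h1 h2] x e he. destruct (rcont_plus _ _ h1 h2 x (e/2)) as [_ _]; [lra|].
    destruct (h1 x (e/2)) as [d1 [p1 H1]]; [lra|]. destruct (h2 x (e/2)) as [d2 [p2 H2]]; [lra|].
    exists (Rmin d1 d2). split; [apply Rmin_pos; auto|]. intros y hy.
    pose proof (H1 y (Rlt_le_trans _ _ _ hy (Rmin_l _ _))).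
    pose proof (H2 y (Rlt_le_trans _ _ _ hy (Rmin_r _ _))).
    eapply Rle_lt_trans; [apply Cm_le_sum|]. simpl. unfold Rminus in *. lra.
Qed.

Lemma rcont_Cmod (f : X -> Cx) : continuous_fun f -> rcont (fun y => Cmod (f y)).
Proof.
  intros hf x e he. destruct (hf x e he) as [d [hd H]]. exists d; split; auto.
  intros y hy. eapply Rle_lt_trans; [apply Cm_rev| apply H; auto].
Qed.

End RC.

Lemma ball_open {X : MetricSpace} (a : X) r : is_open (fun y => md a y < r).
Proof.
  intros y hy. exists (r - md a y). split; [lra|]. intros z hz.
  pose proof (Defs.dist_tri X a y z). lra.
Qed.

Lemma list_lb {T} (l : list T) (r : T -> R) :
  exists d, 0 < d /\ forall t, In t l -> 0 < r t -> d <= r t.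
Proof.
  induction l as [|t l [d [hd H]]].
  - exists 1. split; [lra|]. intros t [].
  - destruct (Rlt_dec 0 (r t)) as [p|p].
    + exists (Rmin d (r t)). split; [apply Rmin_pos; auto|].
      intros u [<-|hu] hr. apply Rmin_r. eapply Rle_trans; [apply Rmin_l|]. apply H; auto.
    + exists d. split; auto. intros u [<-|hu] hr. contradiction. apply H; auto.
Qed.

Lemma fin_net {X : MetricSpace} (J : X -> Prop) (d : R) :
  compact_set J -> 0 < d ->
  exists l : list {x : X | J x}, forall y, J y -> exists a, In a l /\ md (proj1_sig a) y < d.
Proof.
  intros hJ hd.
  destruct (hJ {x : X | J x} (fun a y => md (proj1_sig a) y < d)) as [l Hl].
  - intro a. apply ball_open.
  - intros x hx. exists (exist _ x hx). simpl. rewrite dist_self. auto.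
  - exists l. exact Hl.
Qed.

Lemma unif_cont {X : MetricSpace} (J : X -> Prop) (h : subspace X J -> Cx) :
  compact_set J -> continuous_fun h ->
  forall eps, 0 < eps -> exists d, 0 < d /\
    forall a b : subspace X J, md (proj1_sig a) (proj1_sig b) < d ->
      Cmod (Cadd (h b) (Copp (h a))) < eps.
Proof.
  intros hJ hh eps he.
  set (P := fun p : {x : X | J x} * R => 0 < snd p /\ forall b : subspace X J,
              md (proj1_sig (fst p)) (proj1_sig b) < snd p -> Cmod (Cadd (h b) (Copp (h (fst p)))) < eps/2).
  destruct (hJ ({x : X | J x} * R)%type (fun p y => P p /\ md (proj1_sig (fst p)) y < snd p / 2)) as [l Hl].
  - intros p y [hp hy]. destruct (ball_open (proj1_sig (fst p)) (snd p / 2) y hy) as [r [hr Hr]].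
    exists r; split; auto.
  - intros x hx. destruct (hh (exist _ x hx) (eps/2)) as [r [hr Hr]]; [lra|].
    exists (exist _ x hx, r). split. split; auto. simpl. rewrite dist_self. lra.
  - destruct (list_lb l (fun p => snd p / 2)) as [d [hd Hd]].
    exists d. split; auto. intros a b hab.
    destruct a as [a ha]. destruct (Hl a ha) as [p [hpl [[hp1 hp2] hpa]]].
    pose proof (Hd p hpl ltac:(lra)).
    assert (A1 := hp2 (exist _ a ha) ltac:(simpl; eapply Rlt_trans; [exact hpa|]; lra)).
    assert (A2 : Cmod (Cadd (h b) (Copp (h (fst p)))) < eps/2).
    { apply hp2. pose proof (Defs.dist_tri X (proj1_sig (fst p)) a (proj1_sig b)). simpl in hab. eapply Rle_lt_trans; [exact H0|]. lra. }
    eapply Rle_lt_trans; [apply (Cm_sub_tri _ (h (fst p)))|].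
    rewrite Cm_sub_sym in A1. lra.
Qed.

Lemma fold_ge {T} (l : list T) (u : T -> R) t :
  (forall t, 0 <= u t) -> In t l -> u t <= fold_right (fun a acc => u a + acc) 0 l.
Proof.
  intros hu ht. induction l as [|b l IH]; [destruct ht|]. simpl.
  assert (0 <= fold_right (fun a acc => u a + acc) 0 l).
  { clear ht IH. induction l; simpl; [lra|]. pose proof (hu a); lra. }
  destruct ht as [<-|ht]. lra. pose proof (IH ht). pose proof (hu b). lra.
Qed.

Lemma cbounded {X : MetricSpace} (J : X -> Prop) (h : subspace X J -> Cx) :
  compact_set J -> continuous_fun h -> exists L, forall y, Cmod (h y) <= L.
Proof.
  intros hJ hh. destruct (unif_cont J h hJ hh 1) as [d [hd Hd]]; [lra|].
  destruct (fin_net J d hJ hd) as [l Hl].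
  exists (fold_right (fun a acc => Cmod (h a) + 1 + acc) 0 l).
  intros [y hy]. destruct (Hl y hy) as [a [ha Hay]].
  pose proof (Hd a (exist _ y hy) Hay) as E.
  assert (Cmod (h (exist _ y hy)) <= Cmod (h a) + 1).
  { pose proof (Cm_tri (Cadd (h (exist J y hy)) (Copp (h a))) (h a)).
    replace (Cadd (Cadd (h (exist J y hy)) (Copp (h a))) (h a)) with (h (exist J y hy)) in H
      by (unfold Cadd, Copp; simpl; destruct (h (exist J y hy)); simpl; f_equal; ring). eapply Rle_trans; [exact H|]. rewrite Rplus_comm. apply Rplus_le_compat_l. left; exact E. }
  eapply Rle_trans; [exact H|].
  apply (fold_ge l (fun a => Cmod (h a) + 1)); auto.
  intro t. pose proof (Cm_ge0 (h t)). lra.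
Qed.

Definition sumR {T} (l : list T) (u : T -> R) : R := fold_right (fun a acc => u a + acc) 0 l.

Section Sums.
Context {T : Type}.
Implicit Types (l : list T) (u v : T -> R).

Lemma sumR_nil u : sumR nil u = 0. Proof. reflexivity. Qed.
Lemma sumR_cons a l u : sumR (a :: l) u = u a + sumR l u. Proof. reflexivity. Qed.

Lemma sumR_ge0 l u : (forall t, In t l -> 0 <= u t) -> 0 <= sumR l u.
Proof.
  induction l as [|a l IH]; intro H; rewrite ?sumR_nil, ?sumR_cons; [lra|].
  pose proof (H a (or_introl eq_refl)). pose proof (IH (fun t ht => H t (or_intror ht))). lra.
Qed.

Lemma sumR_le l u v : (forall t, In t l -> u t <= v t) -> sumR l u <= sumR l v.
Proof.
  induction l as [|a l IH]; intro H; rewrite ?sumR_nil, ?sumR_cons; [lra|].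
  pose proof (H a (or_introl eq_refl)). pose proof (IH (fun t ht => H t (or_intror ht))). lra.
Qed.

Lemma sumR_pos l u : (forall t, In t l -> 0 <= u t) -> (exists t, In t l /\ 0 < u t) -> 0 < sumR l u.
Proof.
  induction l as [|a l IH]; intros H [t [ht hp]]; [destruct ht|]. rewrite sumR_cons.
  pose proof (H a (or_introl eq_refl)).
  pose proof (sumR_ge0 l u (fun t ht => H t (or_intror ht))).
  destruct ht as [<-|ht]. lra.
  pose proof (IH (fun t ht => H t (or_intror ht)) (ex_intro _ t (conj ht hp))). lra.
Qed.

Lemma sumR_ext l u v : (forall t, u t = v t) -> sumR l u = sumR l v.
Proof. intro H. induction l; simpl; auto. rewrite H, IHl. auto. Qed.

Lemma sumR_lin l (w f : T -> R) a :
  sumR l (fun t => w t * (a - f t)) = a * sumR l w - sumR l (fun t => w t * f t).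
Proof. induction l; rewrite ?sumR_nil, ?sumR_cons; [ring|]. rewrite ?sumR_cons, IHl. ring. Qed.

Lemma sumR_scal l u c : sumR l (fun t => c * u t) = c * sumR l u.
Proof. induction l; rewrite ?sumR_nil, ?sumR_cons; [ring|]. rewrite ?sumR_cons, IHl. ring. Qed.

Lemma sumR_plus l u v : sumR l (fun t => u t + v t) = sumR l u + sumR l v.
Proof. induction l; rewrite ?sumR_nil, ?sumR_cons; [ring|]. rewrite ?sumR_cons, IHl. ring. Qed.

Lemma Cm_sum l (c : T -> Cx) :
  Cmod (sumR l (fun t => fst (c t)), sumR l (fun t => snd (c t))) <= sumR l (fun t => Cmod (c t)).
Proof.
  induction l as [|a l IH]; simpl.
  - unfold Cmod; simpl. replace (0*0+0*0) with 0 by ring. rewrite sqrt_0. lra.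
  - pose proof (Cm_tri (c a) (sumR l (fun t => fst (c t)), sumR l (fun t => snd (c t)))).
    unfold Cadd in H; simpl in H. unfold sumR in *. lra.
Qed.

Lemma rcont_sumR {X : MetricSpace} l (u : T -> X -> R) :
  (forall t, rcont (u t)) -> rcont (fun y => sumR l (fun t => u t y)).
Proof.
  intro H. induction l; simpl. apply rcont_const. apply rcont_plus; auto.
Qed.

Definition wavg l (w : T -> R) (c : T -> Cx) (tau : R) : Cx :=
  (sumR l (fun t => w t * fst (c t)) / (sumR l w + tau),
   sumR l (fun t => w t * snd (c t)) / (sumR l w + tau)).

Lemma wavg_err l w c tau z :
  (forall t, 0 <= w t) -> 0 <= tau -> 0 < sumR l w + tau ->
  Cmod (Cadd z (Copp (wavg l w c tau))) <=
  (sumR l (fun t => w t * Cmod (Cadd z (Copp (c t)))) + tau * Cmod z) / (sumR l w + tau).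
Proof.
  intros hw ht hS. set (S := sumR l w) in *.
  set (V := (sumR l (fun t => fst (Cscale (w t) (Cadd z (Copp (c t))))),
             sumR l (fun t => snd (Cscale (w t) (Cadd z (Copp (c t))))))).
  assert (E : Cadd z (Copp (wavg l w c tau)) = Cscale (/ (S + tau)) (Cadd V (Cscale tau z))).
  { unfold V, wavg, Cscale, Cadd, Copp; simpl.
    rewrite (sumR_ext l (fun t => w t * (fst z + - fst (c t))) (fun t => w t * (fst z - fst (c t)))) by (intro; ring).
    rewrite (sumR_ext l (fun t => w t * (snd z + - snd (c t))) (fun t => w t * (snd z - snd (c t)))) by (intro; ring).
    rewrite !sumR_lin. fold S. f_equal; field; lra. }
  rewrite E, Cm_scale. rewrite Rabs_right by (apply Rle_ge; left; apply Rinv_0_lt_compat; lra).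
  unfold Rdiv. rewrite (Rmult_comm _ (/ (S + tau))). apply Rmult_le_compat_l. left; apply Rinv_0_lt_compat; lra.
  eapply Rle_trans; [apply Cm_tri|]. rewrite Cm_scale, Rabs_right by lra.
  apply Rplus_le_compat_r. eapply Rle_trans; [apply Cm_sum|].
  apply sumR_le. intros t _. rewrite Cm_scale, Rabs_right by (apply Rle_ge, hw). lra.
Qed.

Lemma wavg_cont {X : MetricSpace} l (w : T -> X -> R) c tau :
  (forall t, rcont (w t)) -> (forall y, 0 < sumR l (fun t => w t y) + tau) ->
  continuous_fun (fun y => wavg l (fun t => w t y) c tau).
Proof.
  intros hw hp. apply cont_iff; split; simpl; unfold Rdiv;
  (apply rcont_mult; [apply rcont_sumR; intro t; apply rcont_mult; auto; apply rcont_const|]);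
  (apply rcont_inv; [intro y; specialize (hp y); lra|]);
  (apply rcont_plus; [apply rcont_sumR; auto | apply rcont_const]).
Qed.

End Sums.

Lemma sumR_ext_in {T} (l : list T) u v : (forall t, In t l -> u t = v t) -> sumR l u = sumR l v.
Proof.
  induction l as [|a l IH]; intro H; auto. rewrite !sumR_cons. rewrite (H a (or_introl eq_refl)).
  rewrite IH; auto. intros t ht; apply H; right; auto.
Qed.

Lemma Cm_0sub z : Cmod (Cadd (0,0) (Copp z)) = Cmod z.
Proof. rewrite <- (Cm_opp z). unfold Cadd, Copp; simpl. f_equal. f_equal; ring. Qed.

Lemma ext_step {X : MetricSpace} (J : X -> Prop) (h : subspace X J -> Cx) M :
  compact_set J -> continuous_fun h -> 0 < M -> (forall y, Cmod (h y) <= M) ->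
  exists e : X -> Cx, continuous_fun e /\ (forall x, Cmod (e x) <= M) /\
    forall y : subspace X J, Cmod (Cadd (h y) (Copp (e (proj1_sig y)))) <= 3/4 * M.
Proof.
  intros hJ hh hM hb.
  destruct (unif_cont J h hJ hh (M/2)) as [d [hd Hd]]; [lra|].
  destruct (fin_net J (d/4) hJ ltac:(lra)) as [l Hl].
  set (w := fun (a : {x : X | J x}) (x : X) => Rmax 0 (d/2 - md (proj1_sig a) x)).
  set (tau := d/16).
  assert (hw0 : forall a x, 0 <= w a x) by (intros; apply Rmax_l).
  assert (hS0 : forall x, 0 <= sumR l (fun a => w a x)) by (intros; apply sumR_ge0; auto).
  exists (fun x => wavg l (fun a => w a x) h tau). split; [|split].
  - apply wavg_cont.
    + intro a. apply rcont_max. apply rcont_const. apply rcont_minus. apply rcont_const. apply rcont_dist.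
    + intro y. pose proof (hS0 y). unfold tau; lra.
  - intro x. pose proof (wavg_err l (fun a => w a x) h tau (0,0) (fun t => hw0 t x)) as E.
    rewrite <- Cm_0sub. eapply Rle_trans; [apply E; pose proof (hS0 x); unfold tau; lra|]. unfold Cmod at 2; simpl. replace (0*0+0*0) with 0 by ring. rewrite sqrt_0, Rmult_0_r, Rplus_0_r.
    pose proof (hS0 x). apply Rle_trans with (sumR l (fun a => w a x) * M / (sumR l (fun a => w a x) + tau)).
    + unfold Rdiv. apply Rmult_le_compat_r. left; apply Rinv_0_lt_compat; unfold tau; lra.
      rewrite Rmult_comm, <- sumR_scal. apply sumR_le. intros a _. rewrite Cm_0sub.
      rewrite (Rmult_comm M). apply Rmult_le_compat_l; auto.
    + apply Rle_trans with (M * ((sumR l (fun a => w a x) + tau) / (sumR l (fun a => w a x) + tau))).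
      * unfold Rdiv. rewrite <- Rmult_assoc, (Rmult_comm M). apply Rmult_le_compat_r. left; apply Rinv_0_lt_compat; unfold tau; lra.
        apply Rmult_le_compat_r; unfold tau; lra.
      * unfold Rdiv. rewrite Rinv_r by (unfold tau; lra). lra.
  - intros [y hy]. simpl.
    set (S := sumR l (fun a => w a y)).
    assert (HS : d/4 <= S).
    { destruct (Hl y hy) as [a [ha Hay]]. apply Rle_trans with (w a y).
      unfold w. eapply Rle_trans; [|apply Rmax_r]. lra.
      apply (fold_ge l (fun a => w a y)); auto. }
    pose proof (wavg_err l (fun a => w a y) h tau (h (exist _ y hy)) (fun t => hw0 t y)) as E.
    eapply Rle_trans; [apply E; unfold tau; fold S; lra|]. fold S.
    apply Rle_trans with ((S * (M/2) + tau * M) / (S + tau)).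
    + unfold Rdiv. apply Rmult_le_compat_r. left; apply Rinv_0_lt_compat; unfold tau; lra.
      apply Rplus_le_compat. replace (S * (M * / 2)) with (sumR l (fun a => M * / 2 * w a y)) by (unfold S; rewrite (sumR_scal l (fun a => w a y)); ring). apply sumR_le. intros a _.
      rewrite (Rmult_comm (M * / 2)). destruct (Rle_lt_dec (w a y) 0) as [h0|h0].
      * replace (w a y) with 0 by (pose proof (hw0 a y); lra). lra.
      * apply Rmult_le_compat_l; [lra|]. left. apply (Hd a (exist _ y hy)). simpl. unfold w in h0. unfold Rmax in h0.
        destruct (Rle_dec 0 (d / 2 - md (proj1_sig a) y)); lra.
      * apply Rmult_le_compat_l. unfold tau; lra. apply hb.
    + assert (0 < S + tau) by (unfold tau; lra).
      apply (Rmult_le_reg_r (S+tau)); auto. unfold Rdiv; rewrite Rmult_assoc, Rinv_l by lra.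
      unfold tau in *. nra.
Qed.

Module SeriesFacts.
Import Coquelicot.Coquelicot.

Lemma geom_series : Series (fun k => (3/4)^k) = 4.
Proof.
  transitivity (/ (1 - 3/4)); [|field]. apply is_series_unique, is_series_geom.
  rewrite Rabs_right; lra.
Qed.

Lemma geom_ex (c : R) : ex_series (fun k => c * (3/4)^k).
Proof.
  exists (c * / (1 - 3/4)). apply (is_series_scal_l c (fun k => (3/4)^k)). apply is_series_geom. rewrite Rabs_right; lra.
Qed.

Lemma dom_ex (a : nat -> R) c : (forall n, Rabs (a n) <= c * (3/4)^n) -> ex_series a.
Proof.
  intro H. apply ex_series_Rabs. apply (ex_series_le (fun n => Rabs (a n)) (fun n => c * (3/4)^n)).
  intro n. unfold norm; simpl. rewrite Rabs_Rabsolu. apply H. apply geom_ex.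
Qed.

Lemma dom_bound (a : nat -> R) c : (forall n, Rabs (a n) <= c * (3/4)^n) ->
  Rabs (Series a) <= 4 * c.
Proof.
  intro H. eapply Rle_trans. apply Series_Rabs.
  apply (dom_ex (fun n => Rabs (a n)) c). intro n; rewrite Rabs_Rabsolu; auto.
  eapply Rle_trans. apply (Series_le _ (fun n => c * (3/4)^n)).
  intro n; split; [apply Rabs_pos|auto]. apply geom_ex.
  rewrite Series_scal_l, (geom_series : Series (pow (3/4)) = 4). lra.
Qed.

Lemma dom_tail (a : nat -> R) c N : (forall n, Rabs (a n) <= c * (3/4)^n) ->
  Rabs (Series a - sum_f_R0 a N) <= 4 * c * (3/4)^(S N).
Proof.
  intro H. rewrite (Series_incr_n a (S N)); [| lia | apply (dom_ex a c H)]. simpl pred.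
  replace (sum_f_R0 a N + Series (fun k => a (S N + k)%nat) - sum_f_R0 a N) with (Series (fun k => a (S N + k)%nat)) by ring.
  replace (4 * c * (3/4)^(S N)) with (4 * (c * (3/4)^(S N))) by ring.
  apply dom_bound. intro n. rewrite (H (S N + n)%nat), pow_add. lra.
Qed.

Lemma dom_lim (a : nat -> R) c l : (forall n, Rabs (a n) <= c * (3/4)^n) ->
  (forall N, Rabs (l - sum_f_R0 a N) <= c * (3/4)^(S N)) -> Series a = l.
Proof.
  intros H1 H2. apply is_series_unique. apply is_series_Reals.
  intros eps he. destruct (Rle_lt_dec c 0) as [hc|hc].
  - exists 0%nat. intros n _. unfold R_dist. rewrite Rabs_minus_sym.
    pose proof (H2 n). pose proof (pow_le (3/4) (S n) ltac:(lra)). 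
    assert (c * (3/4)^(S n) <= 0) by (apply Rmult_le_0_r; lra). lra.
  - destruct (pow_lt_1_zero (3/4) ltac:(rewrite Rabs_right; lra) (eps / c) ltac:(apply Rdiv_lt_0_compat; lra)) as [N HN].
    exists N. intros n hn. unfold R_dist. rewrite Rabs_minus_sym.
    eapply Rle_lt_trans; [apply H2|]. 
    specialize (HN (S n) ltac:(lia)). rewrite Rabs_right in HN by (apply Rle_ge, pow_le; lra).
    apply (Rmult_lt_compat_l c) in HN; auto. replace (c * (eps / c)) with eps in HN by (field; lra). exact HN.
Qed.

End SeriesFacts.
Import SeriesFacts.

Lemma rcont_unif {X : MetricSpace} (f : X -> R) :
  (forall eps, 0 < eps -> exists g, rcont g /\ forall y, Rabs (f y - g y) <= eps) -> rcont f.
Proof.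
  intros H x e he. destruct (H (e/3)) as [g [hg Hg]]; [lra|].
  destruct (hg x (e/3)) as [d [hd Hd]]; [lra|]. exists d; split; auto. intros y hy.
  pose proof (Hg x). pose proof (Hg y). pose proof (Hd y hy).
  replace (f y - f x) with ((f y - g y) + (g y - g x) - (f x - g x)) by ring.
  eapply Rle_lt_trans. apply Rabs_triang_le3 || idtac.
  unfold Rminus at 1. eapply Rle_trans. apply Rabs_triang. rewrite Rabs_Ropp.
  apply Rplus_le_compat_r. apply Rabs_triang. lra.
Qed.

Lemma cont_restrict {X : MetricSpace} (J : X -> Prop) (f : X -> Cx) :
  continuous_fun f -> continuous_fun (fun y : subspace X J => f (proj1_sig y)).
Proof.
  intros hf [x hx] e he. destruct (hf x e he) as [d [hd H]]. exists d; split; [exact hd|].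
  intros [y hy] hxy. apply H. exact hxy.
Qed.

Lemma cont_sub {X : MetricSpace} (f g : X -> Cx) :
  continuous_fun f -> continuous_fun g -> continuous_fun (fun y => Cadd (f y) (Copp (g y))).
Proof.
  intros hf hg. apply cont_iff in hf, hg. destruct hf, hg. apply cont_iff; simpl; split;
  apply rcont_minus; auto.
Qed.

Lemma cont_add {X : MetricSpace} (f g : X -> Cx) :
  continuous_fun f -> continuous_fun g -> continuous_fun (fun y => Cadd (f y) (g y)).
Proof.
  intros hf hg. apply cont_iff in hf, hg. destruct hf, hg. apply cont_iff; simpl; split;
  apply rcont_plus; auto.
Qed.

Lemma cont_mul {X : MetricSpace} (f g : X -> Cx) :
  continuous_fun f -> continuous_fun g -> continuous_fun (fun y => Cmul (f y) (g y)).
Proof.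
  intros hf hg. apply cont_iff in hf, hg. destruct hf, hg. apply cont_iff; simpl; split.
  apply rcont_minus; apply rcont_mult; auto.
  apply rcont_plus; apply rcont_mult; auto.
Qed.

Lemma cont_const {X : MetricSpace} (c : Cx) : continuous_fun (fun _ : X => c).
Proof. apply cont_iff; split; apply rcont_const. Qed.

Definition stepP {X : MetricSpace} (J : X -> Prop) (p : (subspace X J -> Cx) * R) (e : X -> Cx) : Prop :=
  compact_set J -> continuous_fun (fst p) -> 0 < snd p -> (forall y, Cmod (fst p y) <= snd p) ->
  continuous_fun e /\ (forall x, Cmod (e x) <= snd p) /\
  forall y : subspace X J, Cmod (Cadd (fst p y) (Copp (e (proj1_sig y)))) <= 3/4 * snd p.

Lemma stepP_ex {X : MetricSpace} (J : X -> Prop) p : exists e, stepP J p e.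
Proof.
  destruct (classic (compact_set J /\ continuous_fun (fst p) /\ 0 < snd p /\ (forall y, Cmod (fst p y) <= snd p)))
    as [[h1 [h2 [h3 h4]]]|hn].
  - destruct (ext_step J (fst p) (snd p) h1 h2 h3 h4) as [e He]. exists e. intros _ _ _ _. exact He.
  - exists (fun _ => (0,0)). intros h1 h2 h3 h4. exfalso. apply hn. auto.
Qed.

Definition step {X : MetricSpace} (J : X -> Prop) p : X -> Cx :=
  proj1_sig (constructive_indefinite_description _ (stepP_ex J p)).

Lemma step_spec {X : MetricSpace} (J : X -> Prop) p : stepP J p (step J p).
Proof. unfold step. destruct (constructive_indefinite_description _ _). auto. Qed.

Fixpoint rem {X : MetricSpace} (J : X -> Prop) (h : subspace X J -> Cx) (M : R) (n : nat) : subspace X J -> Cx :=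
  match n with
  | O => h
  | S k => fun y => Cadd (rem J h M k y) (Copp (step J (rem J h M k, M * (3/4)^k) (proj1_sig y)))
  end.

Definition en {X : MetricSpace} (J : X -> Prop) h M n : X -> Cx := step J (rem J h M n, M * (3/4)^n).

Lemma rem_inv {X : MetricSpace} (J : X -> Prop) h M :
  compact_set J -> continuous_fun h -> 0 < M -> (forall y, Cmod (h y) <= M) ->
  forall n, continuous_fun (rem J h M n) /\ forall y, Cmod (rem J h M n y) <= M * (3/4)^n.
Proof.
  intros hJ hh hM hb. induction n as [|n [IH1 IH2]].
  - simpl. split; auto. intro y. rewrite Rmult_1_r. auto.
  - assert (hp : 0 < M * (3/4)^n) by (apply Rmult_lt_0_compat; auto; apply pow_lt; lra).
    destruct (step_spec J (rem J h M n, M * (3/4)^n) hJ IH1 hp IH2) as [s1 [s2 s3]].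
    simpl in s3. split.
    + simpl. apply cont_sub; auto. apply cont_restrict; auto.
    + intro y. simpl. eapply Rle_trans; [apply s3|]. simpl. lra.
Qed.

Lemma en_props {X : MetricSpace} (J : X -> Prop) h M :
  compact_set J -> continuous_fun h -> 0 < M -> (forall y, Cmod (h y) <= M) ->
  forall n, continuous_fun (en J h M n) /\ forall x, Cmod (en J h M n x) <= M * (3/4)^n.
Proof.
  intros hJ hh hM hb n. destruct (rem_inv J h M hJ hh hM hb n) as [h1 h2].
  assert (hp : 0 < M * (3/4)^n) by (apply Rmult_lt_0_compat; auto; apply pow_lt; lra).
  destruct (step_spec J (rem J h M n, M * (3/4)^n) hJ h1 hp h2) as [s1 [s2 s3]].
  split; auto.
Qed.

Lemma telescope {X : MetricSpace} (J : X -> Prop) h M (y : subspace X J) N :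
  fst (h y) = sum_f_R0 (fun k => fst (en J h M k (proj1_sig y))) N + fst (rem J h M (S N) y) /\
  snd (h y) = sum_f_R0 (fun k => snd (en J h M k (proj1_sig y))) N + snd (rem J h M (S N) y).
Proof.
  induction N as [|N [IH1 IH2]].
  - simpl. unfold en, Cadd, Copp. simpl. split; ring.
  - rewrite IH1, IH2. remember (S N) as K. simpl. subst K. unfold en, Cadd, Copp. simpl. split; ring.
Qed.

Lemma rcont_sumf {X : MetricSpace} (u : nat -> X -> R) N :
  (forall k, rcont (u k)) -> rcont (fun y => sum_f_R0 (fun k => u k y) N).
Proof.
  intro H. induction N; simpl. apply H. apply rcont_plus; auto.
Qed.

Lemma extension {X : MetricSpace} (J : X -> Prop) (h : subspace X J -> Cx) M :
  compact_set J -> continuous_fun h -> 0 < M -> (forall y, Cmod (h y) <= M) ->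
  exists e : X -> Cx, continuous_fun e /\ (forall x, Cmod (e x) <= 8 * M) /\
    forall y : subspace X J, e (proj1_sig y) = h y.
Proof.
  intros hJ hh hM hb. pose proof (en_props J h M hJ hh hM hb) as HE.
  assert (B1 : forall x n, Rabs (fst (en J h M n x)) <= M * (3/4)^n).
  { intros x n. eapply Rle_trans; [apply Cm_fst|apply (HE n)]. }
  assert (B2 : forall x n, Rabs (snd (en J h M n x)) <= M * (3/4)^n).
  { intros x n. eapply Rle_trans; [apply Cm_snd|apply (HE n)]. }
  exists (fun x => (Coquelicot.Series.Series (fun n => fst (en J h M n x)),
                    Coquelicot.Series.Series (fun n => snd (en J h M n x)))).
  split; [|split].
  - apply cont_iff; simpl; split; apply rcont_unif; intros eps he;
    destruct (pow_lt_1_zero (3/4) ltac:(rewrite Rabs_right; lra) (eps / (4 * M)) ltac:(apply Rdiv_lt_0_compat; lra)) as [N HN];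
    specialize (HN (S N) ltac:(lia)); rewrite Rabs_right in HN by (apply Rle_ge, pow_le; lra);
    apply (Rmult_lt_compat_l (4 * M)) in HN; try lra; replace (4 * M * (eps / (4 * M))) with eps in HN by (field; lra).
    + exists (fun y => sum_f_R0 (fun k => fst (en J h M k y)) N). split.
      * apply (rcont_sumf (fun k y => fst (en J h M k y))). intro k. apply cont_iff, HE.
      * intro y. eapply Rle_trans. apply (dom_tail _ M N (B1 y)). lra.
    + exists (fun y => sum_f_R0 (fun k => snd (en J h M k y)) N). split.
      * apply (rcont_sumf (fun k y => snd (en J h M k y))). intro k. apply cont_iff, HE.
      * intro y. eapply Rle_trans. apply (dom_tail _ M N (B2 y)). lra.
  - intro x. eapply Rle_trans; [apply Cm_le_sum|]. simpl.
    pose proof (dom_bound _ M (B1 x)). pose proof (dom_bound _ M (B2 x)). lra.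
  - intro y.
    apply injective_projections; simpl.
    + apply (dom_lim _ M); auto. intro N. destruct (telescope J h M y N) as [T1 _].
      rewrite T1. replace (_ + _ - _) with (fst (rem J h M (S N) y)) by ring.
      eapply Rle_trans; [apply Cm_fst|]. apply rem_inv; auto.
    + apply (dom_lim _ M); auto. intro N. destruct (telescope J h M y N) as [_ T2].
      rewrite T2. replace (_ + _ - _) with (snd (rem J h M (S N) y)) by ring.
      eapply Rle_trans; [apply Cm_snd|]. apply rem_inv; auto.
Qed.

Lemma Rabs0 x : Rabs x = 0 -> x = 0.
Proof. intro H. destruct (Req_dec x 0); auto. exfalso; apply (Rabs_no_R0 x); auto. Qed.

Definition cross (a b : Cx) : R := fst a * snd b - snd a * fst b.

Lemma cross_bound (u z c : Cx) :
  Rabs (cross u c - cross z c) <= Cmod (Cadd u (Copp z)) * (Rabs (fst c) + Rabs (snd c)).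
Proof.
  unfold cross. set (a := Cadd u (Copp z)).
  replace (fst u * snd c - snd u * fst c - (fst z * snd c - snd z * fst c)) with (fst a * snd c - snd a * fst c)
    by (unfold a, Cadd, Copp; simpl; ring).
  pose proof (Cm_fst a). pose proof (Cm_snd a).
  eapply Rle_trans. unfold Rminus. apply Rabs_triang. rewrite Rabs_Ropp, !Rabs_mult.
  pose proof (Rabs_pos (fst c)). pose proof (Rabs_pos (snd c)). nra.
Qed.

Lemma avoid_lines_strong (L : list Cx) (w : Cx) (r : R) :
  0 < r -> (forall c, In c L -> c <> (0,0)) ->
  exists z rho, 0 < rho /\ Cmod (Cadd z (Copp w)) + rho <= r /\
    forall u, Cmod (Cadd u (Copp z)) < rho -> forall c, In c L -> cross u c <> 0.
Proof.
  intros hr. induction L as [|c L IH]; intro Hnz.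
  - exists w, r. split; auto. split. 
    + replace (Cadd w (Copp w)) with ((0,0) : Cx) by (unfold Cadd, Copp; destruct w; simpl; f_equal; ring).
      unfold Cmod; simpl. replace (0*0+0*0) with 0 by ring. rewrite sqrt_0. lra.
    + intros u _ c [].
  - destruct (IH (fun c h => Hnz c (or_intror h))) as [z [rho [hrho [Hzw Hz]]]].
    assert (hc : c <> (0,0)) by (apply Hnz; left; auto).
    set (s := Rabs (fst c) + Rabs (snd c)).
    assert (hs : 0 < s).
    { unfold s. pose proof (Rabs_pos (fst c)). pose proof (Rabs_pos (snd c)).
      destruct (Req_dec (Rabs (fst c) + Rabs (snd c)) 0) as [E|E]; [|lra].
      exfalso. apply hc. assert (Rabs (fst c) = 0) by lra. assert (Rabs (snd c) = 0) by lra.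
      destruct c as [c1 c2]; simpl in *. f_equal; apply Rabs0; auto. }
    assert (Ez : exists z', Cmod (Cadd z' (Copp z)) < rho/2 /\ cross z' c <> 0).
    { destruct (Req_dec (cross z c) 0) as [e0|e0].
      - set (t := rho / (2 * (s + 1))).
        assert (ht : 0 < t) by (unfold t; apply Rdiv_lt_0_compat; lra).
        exists (Cadd z (Cscale t (- snd c, fst c))). split.
        + replace (Cadd (Cadd z (Cscale t (- snd c, fst c))) (Copp z)) with (Cscale t (- snd c, fst c))
            by (unfold Cadd, Copp, Cscale; destruct z; simpl; f_equal; ring).
          rewrite Cm_scale, Rabs_right by lra. eapply Rle_lt_trans.
          apply Rmult_le_compat_l; [lra|apply Cm_le_sum]. simpl. rewrite Rabs_Ropp.
          replace (Rabs (snd c) + Rabs (fst c)) with s by (unfold s; ring).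
          apply Rlt_le_trans with (t * (s + 1)); [nra|]. unfold t. right. field. lra.
        + unfold cross in *. unfold Cadd, Cscale; simpl.
          replace ((fst z + t * - snd c) * snd c - (snd z + t * fst c) * fst c)
            with ((fst z * snd c - snd z * fst c) - t * (fst c * fst c + snd c * snd c)) by ring.
          rewrite e0. intro E.
          assert (fst c * fst c + snd c * snd c = 0).
          { apply Rmult_eq_reg_l with (- t); [|lra]. lra. }
          apply hc. destruct c as [c1 c2]; simpl in *. f_equal; nra.
      - exists z. split; auto.
        replace (Cadd z (Copp z)) with ((0,0) : Cx) by (unfold Cadd, Copp; destruct z; simpl; f_equal; ring).
        unfold Cmod; simpl. replace (0*0+0*0) with 0 by ring. rewrite sqrt_0. lra. }
    destruct Ez as [z' [Hz'1 Hz'2]].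
    set (k := Rabs (cross z' c)).
    assert (hk : 0 < k) by (apply Rabs_pos_lt; auto).
    exists z', (Rmin (rho/2) (k / (s + 1))). split; [apply Rmin_pos; [lra|apply Rdiv_lt_0_compat; lra]|]. split.
    + pose proof (Cm_sub_tri z' z w). pose proof (Rmin_l (rho/2) (k/(s+1))). lra.
    + intros u hu c0 [<-|hc0].
      * intro E. pose proof (cross_bound u z' c). rewrite E in H. fold s in H.
        replace (0 - cross z' c) with (- cross z' c) in H by ring. rewrite Rabs_Ropp in H. fold k in H.
        assert (Cmod (Cadd u (Copp z')) < k / (s + 1)) by (eapply Rlt_le_trans; [exact hu| apply Rmin_r]).
        assert (Cmod (Cadd u (Copp z')) * s < k).
        { apply Rmult_lt_compat_r with (r := s) in H0; auto.
          eapply Rlt_le_trans; [exact H0|]. unfold Rdiv. rewrite Rmult_assoc.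
          rewrite <- (Rmult_1_r k) at 2. apply Rmult_le_compat_l; [lra|].
          apply (Rmult_le_reg_l (s+1)); [lra|]. rewrite <- Rmult_assoc, Rinv_r by lra. lra. }
        lra.
      * apply Hz; auto. pose proof (Cm_sub_tri u z' z). pose proof (Rmin_l (rho/2) (k/(s+1))). lra.
Qed.

Lemma avoid_lines (L : list Cx) (w : Cx) (r : R) :
  0 < r -> (forall c, In c L -> c <> (0,0)) ->
  exists z, Cmod (Cadd z (Copp w)) < r /\ forall c, In c L -> cross z c <> 0.
Proof.
  intros hr hL. destruct (avoid_lines_strong L w r hr hL) as [z [rho [h1 [h2 h3]]]].
  exists z. split. lra. apply h3.
  replace (Cadd z (Copp z)) with ((0,0) : Cx) by (unfold Cadd, Copp; destruct z; simpl; f_equal; ring).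
  unfold Cmod; simpl. replace (0*0+0*0) with 0 by ring. rewrite sqrt_0. lra.
Qed.

Lemma choose_c (m : nat) (Good : nat -> Cx -> Prop) :
  (forall j L, (forall c, In c L -> c <> (0,0)) -> exists z, Good j z /\ forall c, In c L -> cross z c <> 0) ->
  exists c : nat -> Cx, forall j, (j < m)%nat ->
    Good j (c j) /\ snd (c j) <> 0 /\ forall i, (i < j)%nat -> cross (c j) (c i) <> 0.
Proof.
  intro HG. induction m as [|m [c Hc]].
  - exists (fun _ => (0,0)). intros j hj; lia.
  - destruct (HG m ((1,0) :: map c (seq 0 m))) as [z [Hz1 Hz2]].
    + intros c0 [<-|hc0]. intro E. injection E. lra.
      apply in_map_iff in hc0. destruct hc0 as [i [<- hi]]. apply in_seq in hi.
      destruct (Hc i ltac:(lia)) as [_ [hs _]]. intro E. rewrite E in hs. simpl in hs. lra.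
    + exists (fun j => if Nat.eqb j m then z else c j). intros j hj.
      destruct (Nat.eqb_spec j m) as [->|hne].
      * split; auto. split.
        -- pose proof (Hz2 (1,0) (or_introl eq_refl)). unfold cross in H. simpl in H. lra.
        -- intros i hi. destruct (Nat.eqb_spec i m); [lia|]. apply Hz2. right.
           apply in_map. apply in_seq. lia.
      * destruct (Hc j ltac:(lia)) as [h1 [h2 h3]]. split; auto. split; auto.
        intros i hi. destruct (Nat.eqb_spec i m); [lia|]. auto.
Qed.

Lemma nonvanish_approx (K : MetricSpace) (F : K -> Cx) (eta : R) :
  compact_space K -> covering_dim_le1 K -> continuous_fun F -> 0 < eta ->
  exists G, continuous_fun G /\ (forall x, G x <> (0,0)) /\
    forall x, Cmod (Cadd (G x) (Copp (F x))) < eta.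
Proof.
  intros hK hdim hF heta.
  set (T := fun _ : K => True).
  destruct (unif_cont T (fun y => F (proj1_sig y)) hK (cont_restrict T F hF) (eta/4)) as [d0 [hd0 Hd0]]; [lra|].
  assert (UC : forall x y : K, md x y < d0 -> Cmod (Cadd (F y) (Copp (F x))) < eta/4).
  { intros x y hxy. exact (Hd0 (exist T x I) (exist T y I) hxy). }
  destruct (fin_net T (d0/2) hK ltac:(lra)) as [lp Hlp].
  set (U := fun i y => exists a, nth_error lp i = Some a /\ md (proj1_sig a) y < d0/2).
  destruct (hdim (length lp) U) as [m [V [Vo [Vc [Vr Vord]]]]].
  - intros i _ y [a [ha hy]]. destruct (ball_open (proj1_sig a) (d0/2) y hy) as [r [hr Hr]].
    exists r; split; auto. intros z hz. exists a; split; auto.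
  - intro x. destruct (Hlp x I) as [a [ha hax]]. destruct (In_nth_error lp a ha) as [i hi].
    exists i. split. apply nth_error_Some. rewrite hi; discriminate. exists a; auto.
  - assert (Diam : forall j, (j < m)%nat -> forall x y, V j x -> V j y -> Cmod (Cadd (F y) (Copp (F x))) < eta/2).
    { intros j hj x y hx hy. destruct (Vr j hj) as [i [hi Hi]].
      destruct (Hi x hx) as [a [ha hax]]. destruct (Hi y hy) as [a' [ha' hay]].
      rewrite ha in ha'. injection ha' as <-.
      assert (E1 := UC (proj1_sig a) x ltac:(lra)).
      assert (E2 := UC (proj1_sig a) y ltac:(lra)).
      pose proof (Cm_sub_tri (F y) (F (proj1_sig a)) (F x)). rewrite Cm_sub_sym in E1. lra. }
    set (Good := fun j z => (j < m)%nat -> forall x, V j x -> Cmod (Cadd z (Copp (F x))) < 3 * eta / 4).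
    destruct (choose_c m Good) as [c Hc].
    { intros j L HL. destruct (classic (exists x, V j x /\ (j < m)%nat)) as [[x0 [hx0 hj]]|hn].
      - destruct (avoid_lines L (F x0) (eta/4) ltac:(lra) HL) as [z [hz Hz]]. exists z. split; auto.
        intros _ x hx. pose proof (Diam j hj x x0 hx hx0). pose proof (Cm_sub_tri z (F x0) (F x)). lra.
      - destruct (avoid_lines L (0,0) 1 ltac:(lra) HL) as [z [hz Hz]]. exists z. split; auto.
        intros hj x hx. exfalso. apply hn. eauto. }
    set (valid := fun t : K * R * nat => 0 < snd (fst t) /\ (snd t < m)%nat /\
                  forall y, md (fst (fst t)) y < snd (fst t) -> V (snd t) y).
    destruct (hK (K * R * nat)%type (fun t y => valid t /\ md (fst (fst t)) y < snd (fst t) / 2)) as [lt Hlt].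
    { intros t y [hv hy]. destruct (ball_open (fst (fst t)) (snd (fst t) / 2) y hy) as [r [hr Hr]].
      exists r; split; auto. }
    { intros x _. destruct (Vc x) as [j [hj hx]]. destruct (Vo j hj x hx) as [r [hr Hr]].
      exists (x, r, j). simpl. split. split; auto. rewrite dist_self. lra. }
    set (w := fun t y => if excluded_middle_informative (valid t) then Rmax 0 (snd (fst t) / 2 - md (fst (fst t)) y) else 0).
    assert (hw0 : forall t y, 0 <= w t y).
    { intros t y. unfold w. destruct (excluded_middle_informative _). apply Rmax_l. lra. }
    assert (hwp : forall t y, 0 < w t y -> V (snd t) y /\ (snd t < m)%nat).
    { intros t y. unfold w. destruct (excluded_middle_informative _) as [[v1 [v2 v3]]|]; [|lra].
      unfold Rmax. destruct (Rle_dec 0 (snd (fst t) / 2 - md (fst (fst t)) y)); [|lra].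
      intro h. split; auto. apply v3. lra. }
    assert (hex : forall y, exists t, In t lt /\ 0 < w t y).
    { intro y. destruct (Hlt y I) as [t [ht [hv hy]]]. exists t. split; auto. unfold w.
      destruct (excluded_middle_informative _); [|contradiction].
      eapply Rlt_le_trans; [|apply Rmax_r]. lra. }
    assert (Spos : forall y, 0 < sumR lt (fun t => w t y)).
    { intro y. apply sumR_pos. intros; auto. apply hex. }
    exists (fun y => wavg lt (fun t => w t y) (fun t => c (snd t)) 0). split; [|split].
    + apply wavg_cont.
      * intro t. unfold w. destruct (excluded_middle_informative _).
        apply rcont_max. apply rcont_const. apply rcont_minus. apply rcont_const. apply rcont_dist.
        apply rcont_const.
      * intro y. specialize (Spos y). lra.
    + intros y E. pose proof (Spos y) as hS.
      set (S := sumR lt (fun t => w t y)) in *.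
      set (N1 := sumR lt (fun t => w t y * fst (c (snd t)))).
      set (N2 := sumR lt (fun t => w t y * snd (c (snd t)))).
      assert (EN1 : N1 = 0).
      { apply (f_equal fst) in E. unfold wavg in E. simpl in E. fold S N1 in E.
        replace N1 with (N1 / (S + 0) * (S + 0)) by (field; lra). rewrite E. ring. }
      assert (EN2 : N2 = 0).
      { apply (f_equal snd) in E. unfold wavg in E. simpl in E. fold S N2 in E.
        replace N2 with (N2 / (S + 0) * (S + 0)) by (field; lra). rewrite E. ring. }
      destruct (hex y) as [t0 [ht0 hw0t]]. set (a := snd t0).
      destruct (hwp t0 y hw0t) as [hVa ham]. fold a in hVa, ham.
      destruct (classic (exists t1, In t1 lt /\ 0 < w t1 y /\ snd t1 <> a)) as [[t1 [ht1 [hw1 hb]]]|hn].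
      * set (b := snd t1) in *. destruct (hwp t1 y hw1) as [hVb hbm].
        set (kap := cross (c b) (c a)).
        assert (hk : kap <> 0).
        { unfold kap. destruct (Nat.lt_ge_cases a b) as [h|h].
          - apply (Hc b hbm); auto.
          - assert (a <> b) by auto. destruct (Hc a ham) as [_ [_ H3]].
            specialize (H3 b ltac:(lia)). unfold cross in *. lra. }
        assert (P : 0 < sumR lt (fun t => kap * (w t y * cross (c (snd t)) (c a)))).
        { apply sumR_pos.
          - intros t ht. destruct (Rle_lt_dec (w t y) 0) as [h0|h0].
            + replace (w t y) with 0 by (pose proof (hw0 t y); lra). lra.
            + destruct (hwp t y h0) as [hVt htm].
              destruct (Nat.eq_dec (snd t) a) as [ea|ea].
              * rewrite ea. unfold cross. right. ring.
              * destruct (Nat.eq_dec (snd t) b) as [eb|eb].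
                -- rewrite eb. fold kap. pose proof (hw0 t y). 
                   replace (kap * (w t y * kap)) with (w t y * (kap * kap)) by ring.
                   apply Rmult_le_pos; auto. apply Rle_0_sqr.
                -- exfalso. apply (Vord y a b (snd t) ham hbm htm); auto.
          - exists t1. split; auto. fold b kap.
            replace (kap * (w t1 y * kap)) with (w t1 y * (kap * kap)) by ring.
            apply Rmult_lt_0_compat; auto. apply Rsqr_pos_lt; auto. }
        rewrite (sumR_ext lt _ (fun t => (kap * snd (c a)) * (w t y * fst (c (snd t))) + (- (kap * fst (c a))) * (w t y * snd (c (snd t))))) in P
          by (intro; unfold cross; ring).
        rewrite sumR_plus in P.
        rewrite (sumR_scal lt (fun t => w t y * fst (c (snd t)))) in P.
        rewrite (sumR_scal lt (fun t => w t y * snd (c (snd t)))) in P.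
        fold N1 N2 in P. rewrite EN1, EN2 in P. lra.
      * assert (EA : N2 = snd (c a) * S).
        { unfold N2, S. rewrite <- sumR_scal. apply sumR_ext_in. intros t ht.
          destruct (Rle_lt_dec (w t y) 0) as [h0|h0].
          - replace (w t y) with 0 by (pose proof (hw0 t y); lra). ring.
          - destruct (Nat.eq_dec (snd t) a) as [ea|ea]. rewrite ea; ring.
            exfalso. apply hn. exists t. auto. }
        destruct (Hc a ham) as [_ [hsa _]]. apply hsa.
        rewrite EN2 in EA. apply (Rmult_eq_reg_r S); [|lra]. lra.
    + intro x. rewrite Cm_sub_sym.
      pose proof (Spos x) as hS.
      eapply Rle_lt_trans. apply (wavg_err lt (fun t => w t x) (fun t => c (snd t)) 0 (F x)); auto; lra.
      apply Rle_lt_trans with ((sumR lt (fun t => w t x) * (3 * eta / 4)) / (sumR lt (fun t => w t x) + 0)).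
      * unfold Rdiv. apply Rmult_le_compat_r. left; apply Rinv_0_lt_compat; lra.
        rewrite Rmult_0_l, Rplus_0_r. rewrite Rmult_comm, <- sumR_scal. apply sumR_le. intros t _.
        rewrite (Rmult_comm (3 * eta * / 4)). destruct (Rle_lt_dec (w t x) 0) as [h0|h0].
        -- replace (w t x) with 0 by (pose proof (hw0 t x); lra). lra.
        -- apply Rmult_le_compat_l; [lra|]. destruct (hwp t x h0) as [hv hm].
           destruct (Hc (snd t) hm) as [hg _]. left. rewrite Cm_sub_sym. apply hg; auto.
      * rewrite Rplus_0_r. unfold Rdiv. rewrite (Rmult_comm (sumR _ _)), Rmult_assoc, Rinv_r by lra. lra.
Qed.

Definition Cinv (z : Cx) : Cx :=
  (fst z / (fst z * fst z + snd z * snd z), - snd z / (fst z * fst z + snd z * snd z)).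

Lemma nz_norm (z : Cx) : z <> (0,0) -> fst z * fst z + snd z * snd z <> 0.
Proof.
  intros hz E. apply hz. destruct z as [a b]; simpl in *. f_equal; nra.
Qed.

Lemma Cinv_unique (z w : Cx) : Cmul z w = Cone -> w = Cinv z.
Proof.
  intro H. destruct z as [a b], w as [c d]. unfold Cmul, Cone in H; simpl in H.
  injection H as H1 H2.
  assert (hn : a * a + b * b <> 0).
  { intro E. assert (a = 0) by nra. assert (b = 0) by nra. subst. lra. }
  unfold Cinv; simpl. f_equal.
  - apply (Rmult_eq_reg_l (a*a+b*b)); auto. field_simplify; auto.
    assert (E : a^2*c+b^2*c = a*(a*c-b*d) + b*(a*d+b*c)) by ring. rewrite H1, H2 in E. lra.
  - apply (Rmult_eq_reg_l (a*a+b*b)); auto. field_simplify; auto.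
    assert (E : a^2*d+b^2*d = a*(a*d+b*c) - b*(a*c-b*d)) by ring. rewrite H1, H2 in E. lra.
Qed.

Lemma Cmul_Cinv (z : Cx) : z <> (0,0) -> Cmul z (Cinv z) = Cone.
Proof.
  intro hz. pose proof (nz_norm z hz). unfold Cmul, Cinv, Cone; simpl. f_equal; field; auto.
Qed.

Lemma cont_Cinv {X : MetricSpace} (f : X -> Cx) :
  continuous_fun f -> (forall x, f x <> (0,0)) -> continuous_fun (fun x => Cinv (f x)).
Proof.
  intros hf hz. apply cont_iff in hf. destruct hf as [h1 h2].
  assert (hn : rcont (fun x => fst (f x) * fst (f x) + snd (f x) * snd (f x))).
  { apply rcont_plus; apply rcont_mult; auto. }
  apply cont_iff; simpl; split; unfold Rdiv; apply rcont_mult.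
  auto. apply rcont_inv; auto. intro x; apply nz_norm; auto.
  apply (rcont_scal (-1)) in h2. eapply (fun H => eq_ind _ rcont h2 _ H).
  apply functional_extensionality; intro; ring.
  apply rcont_inv; auto. intro x; apply nz_norm; auto.
Qed.

Theorem lemma8p1 (K : MetricSpace) (J : K -> Prop)
  (B : (subspace K J -> Cx) -> Prop) :
  compact_space K ->
  covering_dim_le1 K ->
  compact_set J ->
  uniform_algebra B ->
  dense_invertibles B ->
  dense_invertibles
    (fun f : K -> Cx =>
       continuous_fun f /\ B (fun y : subspace K J => f (proj1_sig y))).
Proof.
  intros hK hdim hJ hUA hD f [hfc hfB] eps heps.
  destruct hUA as [Bc [Bconst [Badd [Bmul [Bsep Bclosed]]]]].
  destruct (hD _ hfB (eps/32) ltac:(lra)) as [g [[hgB [k [hkB hgk]]] hgc]].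
  set (h := fun y : subspace K J => Cadd (g y) (Copp (f (proj1_sig y)))).
  destruct (extension J h (eps/32) hJ) as [e [hec [heb heJ]]].
  { apply cont_sub. apply Bc; auto. apply cont_restrict; auto. }
  { lra. }
  { intro y. unfold h. rewrite Cm_sub_sym. left; apply hgc. }
  set (FF := fun x => Cadd (f x) (e x)).
  assert (hFc : continuous_fun FF) by (apply cont_add; auto).
  assert (hFJ : forall y : subspace K J, FF (proj1_sig y) = g y).
  { intro y. unfold FF. rewrite heJ. unfold h, Cadd, Copp. simpl. destruct (g y); simpl. f_equal; ring. }
  destruct (cbounded J k hJ (Bc k hkB)) as [L hL].
  pose proof (Rle_abs L) as hLa. pose proof (Rabs_pos L) as hL0.
  set (del := / (Rabs L + 1)).
  assert (hdel : 0 < del) by (unfold del; apply Rinv_0_lt_compat; lra).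
  assert (hgl : forall y, del <= Cmod (g y)).
  { intro y. pose proof (Cm_mul (g y) (k y)) as E. rewrite hgk in E.
    replace (Cmod Cone) with 1 in E by (unfold Cmod, Cone; simpl; replace (1*1+0*0) with 1 by ring; rewrite sqrt_1; auto).
    pose proof (hL y). pose proof (Cm_ge0 (g y)). pose proof (Cm_ge0 (k y)).
    unfold del. apply (Rmult_le_reg_r (Rabs L+1)); [lra|]. rewrite Rinv_l by lra. nra. }
  set (eta := Rmin (del/3) (eps/4)).
  assert (heta : 0 < eta) by (apply Rmin_pos; lra).
  destruct (nonvanish_approx K FF eta hK hdim hFc heta) as [G [hGc [hGz hGF]]].
  set (psi := fun x => Rmin 1 (Rmax 0 (/ eta * (Cmod (FF x) - 2 * eta)))).
  assert (hpsi : forall x, 0 <= psi x <= 1).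
  { intro x. unfold psi. split. apply Rmin_glb; [lra|apply Rmax_l]. apply Rmin_l. }
  set (Phi := fun x => Cadd (FF x) (Cscale (1 - psi x) (Cadd (G x) (Copp (FF x))))).
  assert (hPc : continuous_fun Phi).
  { apply cont_add; auto. assert (hd := cont_sub G FF hGc hFc). apply cont_iff in hd. destruct hd as [g1 g2].
    assert (hp : rcont psi).
    { apply rcont_min. apply rcont_const. apply rcont_max. apply rcont_const. apply rcont_scal.
      apply rcont_minus. apply rcont_Cmod; auto. apply rcont_const. }
    apply cont_iff; simpl; split; apply rcont_mult; auto; apply rcont_minus; auto; apply rcont_const. }
  assert (hPJ : forall y : subspace K J, Phi (proj1_sig y) = g y).
  { intro y. unfold Phi. assert (psi (proj1_sig y) = 1).
    { unfold psi. rewrite hFJ. pose proof (hgl y). pose proof (Rmin_l (del/3) (eps/4)). fold eta in H0.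
      apply Rle_antisym. apply Rmin_l. apply Rmin_glb; [lra|]. eapply Rle_trans; [|apply Rmax_r].
      apply (Rmult_le_reg_l eta); auto. rewrite <- Rmult_assoc, Rinv_r by lra. lra. }
    rewrite H, hFJ. unfold Cscale, Cadd; simpl. destruct (g y); simpl. f_equal; ring. }
  assert (hPz : forall x, Phi x <> (0,0)).
  { intro x. destruct (Rle_lt_dec (psi x) 0) as [h0|h0].
    - replace (Phi x) with (G x). apply hGz. unfold Phi. replace (psi x) with 0 by (pose proof (hpsi x); lra).
      unfold Cscale, Cadd, Copp; simpl. destruct (G x); simpl. f_equal; ring.
    - assert (hF2 : 2 * eta < Cmod (FF x)).
      { unfold psi in h0. destruct (Rle_lt_dec (/ eta * (Cmod (FF x) - 2 * eta)) 0) as [h1|h1].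
        - rewrite Rmax_left in h0 by lra. pose proof (Rmin_r 1 0). lra.
        - apply (Rmult_lt_compat_l eta) in h1; auto. rewrite Rmult_0_r, <- Rmult_assoc, Rinv_r, Rmult_1_l in h1 by lra. lra. }
      intro E. assert (Cmod (Cadd (Phi x) (Copp (FF x))) < eta).
      { unfold Phi. replace (Cadd (Cadd (FF x) (Cscale (1 - psi x) (Cadd (G x) (Copp (FF x))))) (Copp (FF x)))
          with (Cscale (1 - psi x) (Cadd (G x) (Copp (FF x)))) by (unfold Cscale, Cadd, Copp; simpl; f_equal; ring).
        rewrite Cm_scale. pose proof (hpsi x). rewrite Rabs_right by lra. pose proof (hGF x).
        pose proof (Cm_ge0 (Cadd (G x) (Copp (FF x)))). nra. }
      rewrite E, Cm_0sub in H. lra. }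
  exists Phi. split.
  - split. split; auto.
    + replace (fun y : subspace K J => Phi (proj1_sig y)) with g; auto.
      apply functional_extensionality; intro y; rewrite hPJ; auto.
    + exists (fun x => Cinv (Phi x)). split. split.
      * apply cont_Cinv; auto.
      * replace (fun y : subspace K J => Cinv (Phi (proj1_sig y))) with k; auto.
        apply functional_extensionality; intro y. rewrite hPJ. apply Cinv_unique. auto.
      * intro x. apply Cmul_Cinv. auto.
  - intro x. eapply Rle_lt_trans. apply (Cm_sub_tri (f x) (FF x) (Phi x)).
    assert (E1 : Cmod (Cadd (f x) (Copp (FF x))) <= eps/4).
    { unfold FF. replace (Cadd (f x) (Copp (Cadd (f x) (e x)))) with (Copp (e x))
        by (unfold Cadd, Copp; simpl; f_equal; ring). rewrite Cm_opp. pose proof (heb x). lra. }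
    assert (E2 : Cmod (Cadd (FF x) (Copp (Phi x))) < eta).
    { rewrite Cm_sub_sym. unfold Phi.
      replace (Cadd (Cadd (FF x) (Cscale (1 - psi x) (Cadd (G x) (Copp (FF x))))) (Copp (FF x)))
          with (Cscale (1 - psi x) (Cadd (G x) (Copp (FF x)))) by (unfold Cscale, Cadd, Copp; simpl; f_equal; ring).
      rewrite Cm_scale. pose proof (hpsi x). rewrite Rabs_right by lra. pose proof (hGF x).
      pose proof (Cm_ge0 (Cadd (G x) (Copp (FF x)))). nra. }
    pose proof (Rmin_r (del/3) (eps/4)). fold eta in H. lra.
Qed.
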